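(* Let $f=(v_1,v_2,v_3)$ be a non-degenerate counterclockwise triangle with vertices $z_1,z_2,z_3\in\mathbb C$, circumradius $R(f)$ and (positive) area $\mathrm{Area}(f)=\frac1{4\mathrm i}\big((z_3-z_1)(\bar z_2-\bar z_1)-(z_2-z_1)(\bar z_3-\bar z_1)\big)$. Let $D(f)_{i\bar j}=-\frac{\partial^2}{\partial z_i\partial\bar z_j}\mathrm{Vol}(f)$, $i,j\in\{1,2,3\}$. Then for all $\Phi,\Psi:\{v_1,v_2,v_3\}\to\mathbb C$, $$\sum_{i,j=1}^3\Phi(v_i)D(f)_{i\bar j}\overline{\Psi(v_j)}=\frac{\mathrm{Area}(f)}{R(f)^2}\,\overline\nabla\Phi(f)\,\nabla\overline\Psi(f),$$ where $\overline\Psi$ denotes the function $v\mapsto\overline{\Psi(v)}$.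
   Context: $\mathrm{Vol}(f)=\mathrm{Im}\,\mathrm{Li}_2(u)+\ln|u|\,\mathrm{Arg}(1-u)$, $u=\frac{z_3-z_1}{z_2-z_1}$ (Bloch–Wigner function; hyperbolic volume of the ideal tetrahedron $(z_1,z_2,z_3,\infty)$). Discrete derivatives of a function $\Phi$ on the vertices: $\nabla\Phi(f)=\frac1{4\mathrm i}\frac{\Phi(v_1)(\bar z_3-\bar z_2)+\Phi(v_2)(\bar z_1-\bar z_3)+\Phi(v_3)(\bar z_2-\bar z_1)}{\mathrm{Area}(f)}$ and $\overline\nabla\Phi(f)=-\frac1{4\mathrm i}\frac{\Phi(v_1)(z_3-z_2)+\Phi(v_2)(z_1-z_3)+\Phi(v_3)(z_2-z_1)}{\mathrm{Area}(f)}$. Derivatives in $z_i,\bar z_j$ are Wirtinger derivatives. *)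

(* Defs.v *)
From Stdlib Require Import Reals.
From Coquelicot Require Import Coquelicot.
Open Scope R_scope.

(* Principal argument Arg w in (-PI, PI], with Arg 0 = 0. *)
Definition Arg (w : C) : R :=
  let x := fst w in let y := snd w in
  if Rlt_dec 0 x then atan (y / x)
  else if Rlt_dec x 0 then
    (if Rle_dec 0 y then atan (y / x) + PI else atan (y / x) - PI)
  else if Rlt_dec 0 y then PI / 2
  else if Rlt_dec y 0 then - (PI / 2)
  else 0.

(* Imaginary part of the (principal branch of the) dilogarithm,
   Li2(u) = - int_0^u ln(1-t)/t dt = - int_0^1 Log(1 - s u)/s ds,
   hence Im Li2(u) = - int_0^1 Arg(1 - s u)/s ds
   (valid for u outside [1, +oo), in particular for non-real u). *)
Definition ImLi2 (u : C) : R :=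
  - RInt (fun s => Arg (Cminus (RtoC 1) (Cmult (RtoC s) u)) / s) 0 1.

Definition BW (u : C) : R := ImLi2 u + ln (Cmod u) * Arg (Cminus (RtoC 1) u).

(* Vertex configurations: z 0, z 1, z 2 are z_1, z_2, z_3. *)
Definition Vol (z : nat -> C) : R :=
  BW (Cdiv (Cminus (z 2%nat) (z 0%nat)) (Cminus (z 1%nat) (z 0%nat))).

Definition upd (z : nat -> C) (i : nat) (w : C) : nat -> C :=
  fun k => if Nat.eqb k i then w else z k.

Definition pd (G : (nat -> C) -> C) (i : nat) (d : C) (z : nat -> C) : C :=
  (Derive (fun t => fst (G (upd z i (Cplus (z i) (Cmult (RtoC t) d))))) 0,
   Derive (fun t => snd (G (upd z i (Cplus (z i) (Cmult (RtoC t) d))))) 0).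

Definition wz (G : (nat -> C) -> C) (i : nat) (z : nat -> C) : C :=
  Cmult (RtoC (/2)) (Cminus (pd G i (RtoC 1) z) (Cmult Ci (pd G i Ci z))).
Definition wzbar (G : (nat -> C) -> C) (i : nat) (z : nat -> C) : C :=
  Cmult (RtoC (/2)) (Cplus (pd G i (RtoC 1) z) (Cmult Ci (pd G i Ci z))).

Definition Dmat (z : nat -> C) (i j : nat) : C :=
  Copp (wz (fun w => wzbar (fun w' => RtoC (Vol w')) j w) i z).

Definition Area (z : nat -> C) : C :=
  Cdiv (Cminus (Cmult (Cminus (z 2%nat) (z 0%nat)) (Cminus (Cconj (z 1%nat)) (Cconj (z 0%nat))))
               (Cmult (Cminus (z 1%nat) (z 0%nat)) (Cminus (Cconj (z 2%nat)) (Cconj (z 0%nat)))))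
       (Cmult (RtoC 4) Ci).

Definition nabla (z : nat -> C) (Phi : nat -> C) : C :=
  Cdiv (Cplus (Cplus (Cmult (Phi 0%nat) (Cminus (Cconj (z 2%nat)) (Cconj (z 1%nat))))
                     (Cmult (Phi 1%nat) (Cminus (Cconj (z 0%nat)) (Cconj (z 2%nat)))))
              (Cmult (Phi 2%nat) (Cminus (Cconj (z 1%nat)) (Cconj (z 0%nat)))))
       (Cmult (Cmult (RtoC 4) Ci) (Area z)).
Definition nablabar (z : nat -> C) (Phi : nat -> C) : C :=
  Copp (Cdiv (Cplus (Cplus (Cmult (Phi 0%nat) (Cminus (z 2%nat) (z 1%nat)))
                           (Cmult (Phi 1%nat) (Cminus (z 0%nat) (z 2%nat))))
                    (Cmult (Phi 2%nat) (Cminus (z 1%nat) (z 0%nat))))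
             (Cmult (Cmult (RtoC 4) Ci) (Area z))).

Definition sum3 (f : nat -> C) : C := Cplus (Cplus (f 0%nat) (f 1%nat)) (f 2%nat).

(* Main.v *)
Require Import Defs.
From Stdlib Require Import Reals Lra Lia.
From Coquelicot Require Import Coquelicot.
Open Scope R_scope.
Set Bullet Behavior "Strict Subproofs".

Ltac toR := cbv beta; match goal with |- @eq _ ?a ?b => change (@eq R a b) end.
Ltac Rfield := toR; field.

Ltac Rside := repeat split; try assumption; try (intro; nra); try nra.

Lemma Rd_minus (f g : R -> R) x df dg : is_derive f x df -> is_derive g x dg ->
  is_derive (fun y => f y - g y) x (df - dg).
Proof. intros. apply (is_derive_minus f g); auto. Qed.
Lemma Rd_plus (f g : R -> R) x df dg : is_derive f x df -> is_derive g x dg ->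
  is_derive (fun y => f y + g y) x (df + dg).
Proof. intros. apply (is_derive_plus f g); auto. Qed.
Lemma Rd_mult (f g : R -> R) x df dg : is_derive f x df -> is_derive g x dg ->
  is_derive (fun y => f y * g y) x (df * g x + f x * dg).
Proof. intros. apply (is_derive_mult f g); auto. intros; apply Rmult_comm. Qed.
Lemma Rd_const (c : R) x : is_derive (fun _ => c) x 0.
Proof. apply (is_derive_const c x). Qed.
Lemma Rd_id x : is_derive (fun y => y) x 1.
Proof. apply (is_derive_id x). Qed.

Lemma is_derive_eq (f : R -> R) x l l' : is_derive f x l -> l = l' -> is_derive f x l'.
Proof. intros H ->; exact H. Qed.

Lemma cont_pos (f : R -> R) t : continuous f t -> 0 < f t -> locally t (fun s => 0 < f s).
Proof.
  intros Hc Hp.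
  assert (H := proj1 (filterlim_locally f (f t)) Hc (mkposreal _ Hp)).
  eapply filter_imp; [|exact H]. intros s Hs. cbn in Hs. unfold ball in Hs; cbn in Hs.
  unfold AbsRing_ball, abs, minus, plus, opp in Hs; cbn in Hs.
  apply Rabs_def2 in Hs. lra.
Qed.

Lemma cont_neg (f : R -> R) t : continuous f t -> f t < 0 -> locally t (fun s => f s < 0).
Proof.
  intros Hc Hp.
  assert (Hp' : 0 < - f t) by lra.
  assert (H := proj1 (filterlim_locally f (f t)) Hc (mkposreal _ Hp')).
  eapply filter_imp; [|exact H]. intros s Hs. cbn in Hs. unfold ball in Hs; cbn in Hs.
  unfold AbsRing_ball, abs, minus, plus, opp in Hs; cbn in Hs.
  apply Rabs_def2 in Hs. lra.
Qed.

Lemma Arg_re_pos a b : 0 < a -> Arg (a, b) = atan (b / a).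
Proof. intros Ha. unfold Arg; cbn. destruct (Rlt_dec 0 a); [reflexivity|lra]. Qed.

Lemma atan_neg_inv v : v < 0 -> atan v = - (PI/2) - atan (/ v).
Proof.
  intros Hv.
  assert (H : atan (/ / (- v)) = PI/2 - atan (/ (- v))) by (apply atan_inv; apply Rinv_0_lt_compat; lra).
  rewrite Rinv_inv in H. rewrite atan_opp in H.
  replace (/ (- v)) with (- / v) in H by (field; repeat split; lra). rewrite atan_opp in H. lra.
Qed.

Lemma atan_pos_inv v : 0 < v -> atan v = PI/2 - atan (/ v).
Proof.
  intros Hv.
  assert (H : atan (/ / v) = PI/2 - atan (/ v)) by (apply atan_inv; apply Rinv_0_lt_compat; lra).
  rewrite Rinv_inv in H. exact H.
Qed.

Lemma Arg_im_neg a b : b < 0 -> Arg (a, b) = - (PI/2) - atan (a / b).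
Proof.
  intros Hb. unfold Arg; cbn.
  destruct (Rlt_dec 0 a).
  - rewrite atan_neg_inv. 2: { apply Rdiv_neg_pos; lra. }
    f_equal. f_equal. field. lra.
  - destruct (Rlt_dec a 0).
    + destruct (Rle_dec 0 b); [lra|].
      rewrite atan_pos_inv. 2: { apply Rdiv_neg_neg; lra. }
      replace (/ (b / a)) with (a / b) by (field; repeat split; lra). lra.
    + assert (a = 0) by lra. subst.
      destruct (Rlt_dec 0 b); [lra|]. destruct (Rlt_dec b 0); [|lra].
      replace (0 / b) with 0 by (field; repeat split; lra). rewrite atan_0. lra.
Qed.

Lemma Arg_im_pos a b : 0 < b -> Arg (a, b) = PI/2 - atan (a / b).
Proof.
  intros Hb. unfold Arg; cbn.
  destruct (Rlt_dec 0 a).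
  - rewrite atan_pos_inv. 2: { apply Rdiv_pos_pos; lra. }
    f_equal. f_equal. field. lra.
  - destruct (Rlt_dec a 0).
    + destruct (Rle_dec 0 b); [|lra].
      rewrite atan_neg_inv. 2: { apply Rdiv_pos_neg; lra. }
      replace (/ (b / a)) with (a / b) by (field; repeat split; lra). lra.
    + assert (a = 0) by lra. subst.
      destruct (Rlt_dec 0 b); [|lra].
      replace (0 / b) with 0 by (field; repeat split; lra). rewrite atan_0. lra.
Qed.

Lemma is_derive_atan_comp (g : R -> R) t dg :
  is_derive g t dg -> is_derive (fun s => atan (g s)) t (dg / (1 + (g t)^2)).
Proof.
  intros H. eapply is_derive_eq.
  - apply (is_derive_comp atan g t _ dg (is_derive_atan (g t)) H).
  - cbn. unfold scal; cbn; unfold mult; cbn. unfold Rsqr. Rfield; Rside.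
Qed.

Lemma Arg_derive (a b : R -> R) t da db :
  is_derive a t da -> is_derive b t db -> (0 < a t \/ b t <> 0) ->
  is_derive (fun s => Arg (a s, b s)) t ((a t * db - b t * da) / (a t ^ 2 + b t ^ 2)).
Proof.
  intros Ha Hb Hc.
  assert (Ca : continuous a t) by (apply (@ex_derive_continuous R_AbsRing R_NormedModule); exists da; exact Ha).
  assert (Cb : continuous b t) by (apply (@ex_derive_continuous R_AbsRing R_NormedModule); exists db; exact Hb).
  destruct (Rlt_dec 0 (a t)) as [Hp|Hp].
  - apply (is_derive_ext_loc (fun s => atan (b s / a s))).
    + eapply filter_imp; [|exact (cont_pos a t Ca Hp)]. intros s Hs. rewrite Arg_re_pos; auto.
    + eapply is_derive_eq. apply is_derive_atan_comp. apply is_derive_div; eauto; lra.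
      Rfield; Rside.
  - assert (Hb0 : b t <> 0) by (destruct Hc; [lra|auto]).
    destruct (Rlt_dec (b t) 0) as [Hn|Hn].
    + apply (is_derive_ext_loc (fun s => - (PI/2) - atan (a s / b s))).
      * eapply filter_imp; [|exact (cont_neg b t Cb Hn)]. intros s Hs. rewrite Arg_im_neg; auto.
      * eapply is_derive_eq.
        apply Rd_minus. apply Rd_const. apply is_derive_atan_comp. apply is_derive_div; eauto.
        Rfield; Rside.
    + assert (Hq : 0 < b t) by lra.
      apply (is_derive_ext_loc (fun s => (PI/2) - atan (a s / b s))).
      * eapply filter_imp; [|exact (cont_pos b t Cb Hq)]. intros s Hs. rewrite Arg_im_pos; auto.
      * eapply is_derive_eq.
        apply Rd_minus. apply Rd_const. apply is_derive_atan_comp. apply is_derive_div; eauto.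
        Rfield; Rside.
Qed.

Lemma Rd_ext (f g : R -> R) x l : (forall t, f t = g t) -> is_derive f x l -> is_derive g x l.
Proof. intros. apply (is_derive_ext f g); auto. Qed.
Lemma Rd_ext_loc (f g : R -> R) x l : locally x (fun t => f t = g t) -> is_derive f x l -> is_derive g x l.
Proof. intros. apply (is_derive_ext_loc f g); auto. Qed.

Lemma Rd_opp (f : R -> R) x l : is_derive f x l -> is_derive (fun y => - f y) x (- l).
Proof. intros. apply (is_derive_opp f); auto. Qed.
Lemma Rd_unique (f : R -> R) x l : is_derive f x l -> Derive f x = l.
Proof. intros. apply is_derive_unique; auto. Qed.
Lemma Rcont_of_derive (f : R -> R) x : ex_derive f x -> continuous f x.
Proof. intros. apply (@ex_derive_continuous R_AbsRing R_NormedModule); auto. Qed.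
Lemma Rex_RInt_cont (f : R -> R) a b : (forall z, Rmin a b <= z <= Rmax a b -> continuous f z) -> ex_RInt f a b.
Proof. intros. apply (@ex_RInt_continuous R_CompleteNormedModule); auto. Qed.
Lemma RRInt_opp (f : R -> R) a b : ex_RInt f a b -> RInt (fun x => - f x) a b = - RInt f a b.
Proof. intros. apply (@RInt_opp R_CompleteNormedModule); auto. Qed.
Lemma RRInt_plus (f g : R -> R) a b : ex_RInt f a b -> ex_RInt g a b ->
  RInt (fun x => f x + g x) a b = RInt f a b + RInt g a b.
Proof. intros. apply (@RInt_plus R_CompleteNormedModule); auto. Qed.
Lemma RRInt_scal (f : R -> R) a b l : ex_RInt f a b -> RInt (fun x => l * f x) a b = l * RInt f a b.
Proof. intros. apply (@RInt_scal R_CompleteNormedModule); auto. Qed.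
Lemma RFTC (f df : R -> R) a b : (forall t, Rmin a b <= t <= Rmax a b -> is_derive f t (df t)) ->
  (forall t, Rmin a b <= t <= Rmax a b -> continuous df t) -> RInt df a b = f b - f a.
Proof. intros. apply (@is_RInt_unique R_CompleteNormedModule).
  apply (@is_RInt_derive R_CompleteNormedModule); auto. Qed.

Definition Sq x y s := (1 - s*x)^2 + (s*y)^2.
Definition theta x y s := Arg (1 - s*x, -(s*y)).
Definition kf x y s := if Req_EM_T s 0 then -y else theta x y s / s.

Lemma Sq_pos x y s : 0 < y -> 0 < Sq x y s.
Proof.
  intros Hy. unfold Sq. destruct (Req_dec s 0) as [->|Hs].
  - replace ((1 - 0*x)^2 + (0*y)^2) with 1 by ring. lra.
  - assert (0 < (s*y)^2) by (apply pow2_gt_0; intro H; apply Rmult_integral in H; lra).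
    assert (0 <= (1 - s*x)^2) by (apply pow2_ge_0). lra.
Qed.

Lemma theta_deriv x y s : 0 < y -> is_derive (theta x y) s (- y / Sq x y s).
Proof.
  intros Hy. unfold theta.
  assert (Hs := Sq_pos x y s Hy).
  eapply is_derive_eq.
  - apply (Arg_derive (fun s => 1 - s*x) (fun s => -(s*y)) s (-x) (-y)).
    + auto_derive; [exact I|Rfield].
    + auto_derive; [exact I|Rfield].
    + destruct (Req_dec s 0) as [->|H0]; [left; lra|right].
      intro H. assert (s*y = 0) by lra. apply Rmult_integral in H1. lra.
  - unfold Sq in *. Rfield. intro H. assert ((1 - s*x)^2 + (s*y)^2 = 0) by (rewrite <- H; ring). lra.
Qed.

Lemma theta_0 x y : theta x y 0 = 0.
Proof.
  unfold theta. rewrite Arg_re_pos by lra.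
  replace (- (0 * y) / (1 - 0 * x)) with 0 by Rfield. apply atan_0.
Qed.

Lemma kf_cont x y s : 0 < y -> continuous (kf x y) s.
Proof.
  intros Hy.
  destruct (Req_dec s 0) as [->|Hs].
  - intros P HP.
    assert (Hd := proj1 (is_derive_Reals _ _ _) (theta_deriv x y 0 Hy)).
    destruct HP as [eps HP].
    destruct (Hd eps (cond_pos eps)) as [delta Hdel].
    exists delta. intros r Hr. change R in r. apply HP.
    unfold kf. destruct (Req_EM_T 0 0) as [_|]; [|lra].
    destruct (Req_EM_T r 0) as [->|Hr0].
    + apply ball_center.
    + specialize (Hdel r Hr0).
      assert (Hr' : Rabs r < delta).
      { unfold ball in Hr; cbn in Hr. unfold AbsRing_ball, abs, minus, plus, opp in Hr; cbn in Hr.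
        rewrite Ropp_0, Rplus_0_r in Hr. exact Hr. }
      specialize (Hdel Hr'). rewrite theta_0 in Hdel.
      replace (0 + r) with r in Hdel by ring.
      unfold Sq in Hdel. replace ((1 - 0 * x) ^ 2 + (0 * y) ^ 2) with 1 in Hdel by ring.
      unfold ball; cbn. unfold AbsRing_ball, abs, minus, plus, opp; cbn.
      replace (theta x y r / r + - - y) with ((theta x y r - 0) / r - - y / 1) by (field; auto).
      exact Hdel.
  - apply (continuous_ext_loc _ (fun r => theta x y r / r)).
    + destruct (Rlt_dec 0 s) as [Hp|Hn].
      * eapply filter_imp; [|exact (cont_pos (fun r => r) s (continuous_id s) Hp)].
        intros r Hr. unfold kf. destruct (Req_EM_T r 0); [lra|reflexivity].
      * assert (Hn' : s < 0) by lra.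
        eapply filter_imp; [|exact (cont_neg (fun r => r) s (continuous_id s) Hn')].
        intros r Hr. unfold kf. destruct (Req_EM_T r 0); [lra|reflexivity].
    + apply (@ex_derive_continuous R_AbsRing R_NormedModule).
      eexists. apply is_derive_div. apply theta_deriv; auto. apply Rd_id. auto.
Qed.

Lemma ImLi2_kf x y : ImLi2 (x,y) = - RInt (kf x y) 0 1.
Proof.
  unfold ImLi2. f_equal. apply RInt_ext. intros s Hs.
  rewrite Rmin_left in Hs by lra. rewrite Rmax_right in Hs by lra.
  unfold kf. destruct (Req_EM_T s 0); [lra|]. unfold theta. f_equal. f_equal.
  unfold Cminus, Cmult, Cplus, Copp, RtoC; cbn. f_equal; ring.
Qed.

Lemma kf_dx (y u v : R) : 0 < y -> is_derive (fun z => kf z y v) u (-(v*y)/Sq u y v).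
Proof.
  intros Hy. assert (HS := Sq_pos u y v Hy).
  destruct (Req_EM_T v 0) as [->|Hv].
 
  - apply (Rd_ext (fun _ => -y)).
    + intros z. unfold kf. destruct (Req_EM_T 0 0); [reflexivity|lra].
    + eapply is_derive_eq. apply Rd_const. unfold Sq in *. Rfield; Rside.
  - refine (Rd_ext (fun z => theta z y v / v) _ u _ _ _).
    + intros z. unfold kf. destruct (Req_EM_T v 0); [lra|reflexivity].
    + eapply is_derive_eq; [apply is_derive_div; [|apply Rd_const| cbv beta; auto]|].
      * unfold theta.
        apply (Arg_derive (fun z => 1 - v*z) (fun _ => -(v*y)) u (-v) 0).
        -- auto_derive; [exact I|Rfield].
        -- apply Rd_const.
        -- right. intro H. assert (v*y = 0) by lra. apply Rmult_integral in H0. lra.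
      * unfold Sq in *. Rfield; Rside.
Qed.

Lemma kf_dy (x u v : R) : 0 < u -> is_derive (fun z => kf x z v) u (-(1 - v*x)/Sq x u v).
Proof.
  intros Hu. assert (HS := Sq_pos x u v Hu).
  destruct (Req_EM_T v 0) as [->|Hv].
  - apply (Rd_ext (fun z => -z)).
    + intros z. unfold kf. destruct (Req_EM_T 0 0); [reflexivity|lra].
    + auto_derive; [exact I|]. unfold Sq in *. Rfield; Rside.
  - refine (Rd_ext (fun z => theta x z v / v) _ u _ _ _).
    + intros z. unfold kf. destruct (Req_EM_T v 0); [lra|reflexivity].
    + eapply is_derive_eq; [apply is_derive_div; [|apply Rd_const| cbv beta; auto]|].
      * unfold theta.
        apply (Arg_derive (fun _ => 1 - v*x) (fun z => -(v*z)) u 0 (-v)).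
        -- apply Rd_const.
        -- auto_derive; [exact I|Rfield].
        -- right. intro H. assert (v*u = 0) by lra. apply Rmult_integral in H0. lra.
      * unfold Sq in *. Rfield; Rside.
Qed.

Ltac c2d := repeat first [apply continuity_2d_pt_plus | apply continuity_2d_pt_minus
  | apply continuity_2d_pt_mult | apply continuity_2d_pt_opp | apply continuity_2d_pt_id1
  | apply continuity_2d_pt_id2 | apply continuity_2d_pt_const].

Lemma Sq_c2d_x y x t : continuity_2d_pt (fun u v => Sq u y v) x t.
Proof. apply (continuity_2d_pt_ext (fun u v => (1 - v*u)*(1-v*u) + (v*y)*(v*y))).
  intros; unfold Sq; ring. c2d. Qed.
Lemma Sq_c2d_y x y t : continuity_2d_pt (fun u v => Sq x u v) y t.
Proof. apply (continuity_2d_pt_ext (fun u v => (1 - v*x)*(1-v*x) + (v*u)*(v*u))).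
  intros; unfold Sq; ring. c2d. Qed.

Definition Jx x y := RInt (fun t => t*y/Sq x y t) 0 1.
Definition Jy x y := RInt (fun t => (1 - t*x)/Sq x y t) 0 1.

Ltac sqnz x y z Hy := let H := fresh in assert (H := Sq_pos x y z Hy); unfold Sq in H; intro; nra.

Lemma exR1 x y : 0 < y -> ex_RInt (fun t => t*y/Sq x y t) 0 1.
Proof. intros Hy. apply Rex_RInt_cont. intros z _. apply Rcont_of_derive.
  unfold Sq; auto_derive. sqnz x y z Hy. Qed.
Lemma exR2 x y : 0 < y -> ex_RInt (fun t => (1 - t*x)/Sq x y t) 0 1.
Proof. intros Hy. apply Rex_RInt_cont. intros z _. apply Rcont_of_derive.
  unfold Sq; auto_derive. sqnz x y z Hy. Qed.

Lemma ImLi2_dx x y : 0 < y -> is_derive (fun u => ImLi2 (u,y)) x (Jx x y).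
Proof.
  intros Hy.
  apply (Rd_ext (fun u => - RInt (kf u y) 0 1)).
  { intros u. rewrite ImLi2_kf. reflexivity. }
  eapply is_derive_eq.
  { apply Rd_opp. apply (is_derive_RInt_param (fun u t => kf u y t) 0 1 x).
    - apply filter_forall. intros u t _. eexists. apply kf_dx; auto.
    - intros t _. apply (continuity_2d_pt_ext (fun u v => -(v*y) * / Sq u y v)).
      + intros u v. symmetry. apply Rd_unique. apply kf_dx; auto.
      + apply continuity_2d_pt_mult; [c2d|]. apply continuity_2d_pt_inv.
        * apply Sq_c2d_x.
        * apply Rgt_not_eq, Sq_pos; auto.
    - apply filter_forall. intros u. apply Rex_RInt_cont. intros z _. apply kf_cont; auto. }
  unfold Jx.
  rewrite (RInt_ext _ (fun t => - (t*y/Sq x y t))).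
  { rewrite RRInt_opp by (apply exR1; auto). toR; ring. }
  intros t _. cbv beta. rewrite (Rd_unique _ _ (-(t*y)/Sq x y t)) by (apply kf_dx; auto). unfold Rdiv; toR; ring.
Qed.

Lemma ImLi2_dy x y : 0 < y -> is_derive (fun u => ImLi2 (x,u)) y (Jy x y).
Proof.
  intros Hy.
  apply (Rd_ext (fun u => - RInt (kf x u) 0 1)).
  { intros u. rewrite ImLi2_kf. reflexivity. }
  assert (Hloc : locally y (fun u => 0 < u)) by (apply (cont_pos (fun u => u)); [apply continuous_id|auto]).
  eapply is_derive_eq.
  { apply Rd_opp. apply (is_derive_RInt_param (fun u t => kf x u t) 0 1 y).
    - eapply filter_imp; [|exact Hloc]. intros u Hu t _. eexists. apply kf_dy; auto.
    - intros t _. apply (continuity_2d_pt_ext_loc (fun u v => -(1 - v*x) * / Sq x u v)).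
      + exists (mkposreal y Hy). intros u v Hu _. cbn in Hu. apply Rabs_def2 in Hu.
        symmetry. apply Rd_unique. apply kf_dy; lra.
      + apply continuity_2d_pt_mult; [c2d|]. apply continuity_2d_pt_inv.
        * apply Sq_c2d_y.
        * apply Rgt_not_eq, Sq_pos; auto.
    - eapply filter_imp; [|exact Hloc]. intros u Hu. apply Rex_RInt_cont. intros z _. apply kf_cont; auto. }
  unfold Jy.
  rewrite (RInt_ext _ (fun t => - ((1 - t*x)/Sq x y t))).
  { rewrite RRInt_opp by (apply exR2; auto). toR; ring. }
  intros t _. cbv beta. rewrite (Rd_unique _ _ (-(1 - t*x)/Sq x y t)) by (apply kf_dy; auto). unfold Rdiv; toR; ring.
Qed.

Lemma Sq_1 x y : Sq x y 0 = 1.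
Proof. unfold Sq. ring. Qed.

Lemma E1 x y : 0 < y -> x * Jx x y + y * Jy x y = - theta x y 1.
Proof.
  intros Hy. unfold Jx, Jy.
  rewrite <- (RRInt_scal _ 0 1 x) by (apply exR1; auto).
  rewrite <- (RRInt_scal _ 0 1 y) by (apply exR2; auto).
  rewrite <- RRInt_plus.
  2,3: apply Rex_RInt_cont; intros z _; apply Rcont_of_derive; unfold Sq; auto_derive; sqnz x y z Hy.
  rewrite (RInt_ext _ (fun t => - (- y / Sq x y t))).
  2: { intros t _. assert (H := Sq_pos x y t Hy). Rfield; Rside. }
  rewrite RRInt_opp.
  2: { apply Rex_RInt_cont; intros z _; apply Rcont_of_derive; unfold Sq; auto_derive; sqnz x y z Hy. }
  rewrite (RFTC (theta x y)).
  - rewrite theta_0. ring.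
  - intros t _. apply theta_deriv; auto.
  - intros z _; apply Rcont_of_derive; unfold Sq; auto_derive; sqnz x y z Hy.
Qed.

Ltac exRc x y Hy := apply Rex_RInt_cont; intros ?z _; apply Rcont_of_derive; unfold Sq; auto_derive; sqnz x y z Hy.

Lemma E2 x y : 0 < y -> x * Jy x y - y * Jx x y = - (ln (Sq x y 1) / 2).
Proof.
  intros Hy. unfold Jx, Jy.
  rewrite <- (RRInt_scal _ 0 1 x) by (apply exR2; auto).
  rewrite <- (RRInt_scal _ 0 1 y) by (apply exR1; auto).
  unfold Rminus at 1.
  rewrite <- RRInt_opp by exRc x y Hy.
  rewrite <- RRInt_plus by exRc x y Hy.
  rewrite (RInt_ext _ (fun t => (x * (1 - t*x) - t * y^2) / Sq x y t)).
  2: { intros t _. assert (H := Sq_pos x y t Hy). Rfield; Rside. }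
  rewrite (RFTC (fun t => - (ln (Sq x y t) / 2))).
  - rewrite Sq_1, ln_1. toR; field.
  - intros t _. assert (H := Sq_pos x y t Hy). unfold Sq in *. auto_derive.
    + lra.
    + Rfield; Rside.
  - intros z _; apply Rcont_of_derive; unfold Sq; auto_derive; sqnz x y z Hy.
Qed.

Lemma Jx_closed x y : 0 < y -> Jx x y = (y * (ln (Sq x y 1) / 2) - x * theta x y 1) / (x^2 + y^2).
Proof.
  intros Hy. assert (H1 := E1 x y Hy). assert (H2 := E2 x y Hy).
  assert (Hp : 0 < x^2 + y^2) by nra.
  apply (Rmult_eq_reg_l (x^2+y^2)); [|lra].
  replace ((x ^ 2 + y ^ 2) * Jx x y) with (x * (x * Jx x y + y * Jy x y) - y * (x * Jy x y - y * Jx x y)) by ring.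
  rewrite H1, H2. field. lra.
Qed.

Lemma Jy_closed x y : 0 < y -> Jy x y = (- y * theta x y 1 - x * (ln (Sq x y 1) / 2)) / (x^2 + y^2).
Proof.
  intros Hy. assert (H1 := E1 x y Hy). assert (H2 := E2 x y Hy).
  assert (Hp : 0 < x^2 + y^2) by nra.
  apply (Rmult_eq_reg_l (x^2+y^2)); [|lra].
  replace ((x ^ 2 + y ^ 2) * Jy x y) with (y * (x * Jx x y + y * Jy x y) + x * (x * Jy x y - y * Jx x y)) by ring.
  rewrite H1, H2. field. lra.
Qed.

Lemma ln_sqrt' q : 0 < q -> ln (sqrt q) = ln q / 2.
Proof.
  intros Hq. assert (H := sqrt_lt_R0 q Hq).
  assert (E : q = sqrt q * sqrt q) by (rewrite sqrt_sqrt; lra).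
  rewrite E at 2. rewrite ln_mult by auto. field.
Qed.

Definition Bx x y := y * (ln (Sq x y 1) / 2) / (x^2+y^2) - y * (ln (x^2+y^2) / 2) / Sq x y 1.
Definition By x y := - (x * (ln (Sq x y 1) / 2) / (x^2+y^2) + (1-x) * (ln (x^2+y^2) / 2) / Sq x y 1).

Lemma BW_eq x y : 0 < y -> BW (x,y) = ImLi2 (x,y) + ln (x^2+y^2) / 2 * theta x y 1.
Proof.
  intros Hy. unfold BW. f_equal. f_equal.
  - unfold Cmod; cbn. apply ln_sqrt'. nra.
  - unfold theta, Cminus, Cplus, Copp, RtoC; cbn. f_equal; f_equal; ring.
Qed.

Lemma BW_dx x y : 0 < y -> is_derive (fun u => BW (u,y)) x (Bx x y).
Proof.
  intros Hy.
  apply (Rd_ext (fun u => ImLi2 (u,y) + ln (u^2+y^2) / 2 * theta u y 1)).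
  { intros u. rewrite BW_eq; auto. }
  assert (H1 := Sq_pos x y 1 Hy).
  assert (H2 : 0 < x^2 + y^2) by nra.
  eapply is_derive_eq.
  { apply Rd_plus. apply ImLi2_dx; auto. apply Rd_mult.
    - auto_derive; [lra|reflexivity].
    - unfold theta. apply (Arg_derive (fun u => 1 - 1*u) (fun _ => -(1*y)) x (-1) 0).
      + auto_derive; [exact I|Rfield].
      + apply Rd_const.
      + right. lra. }
  rewrite Jx_closed by auto. unfold Bx, Sq in *. Rfield; Rside.
Qed.

Lemma BW_dy x y : 0 < y -> is_derive (fun v => BW (x,v)) y (By x y).
Proof.
  intros Hy.
  assert (Hloc : locally y (fun u => 0 < u)) by (apply (cont_pos (fun u => u)); [apply continuous_id|auto]).
  apply (Rd_ext_loc (fun v => ImLi2 (x,v) + ln (x^2+v^2) / 2 * theta x v 1)).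
  { eapply filter_imp; [|exact Hloc]. intros u Hu. rewrite BW_eq; auto. }
  assert (H1 := Sq_pos x y 1 Hy).
  assert (H2 : 0 < x^2 + y^2) by nra.
  eapply is_derive_eq.
  { apply Rd_plus. apply ImLi2_dy; auto. apply Rd_mult.
    - auto_derive; [lra|reflexivity].
    - unfold theta. apply (Arg_derive (fun _ => 1 - 1*x) (fun v => -(1*v)) y 0 (-1)).
      + apply Rd_const.
      + auto_derive; [exact I|Rfield].
      + right. lra. }
  rewrite Jy_closed by auto. unfold By, Sq in *. Rfield; Rside.
Qed.

Lemma between_abs a b c : Rmin a b <= c <= Rmax a b -> Rabs (c - a) <= Rabs (b - a).
Proof. unfold Rmin, Rmax. destruct (Rle_dec a b); intros; split_Rabs; lra. Qed.

Lemma diff_partials (f : R -> R -> R) fx fy x y :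
  locally_2d (fun u v => is_derive (fun z => f z v) u (fx u v) /\ is_derive (fun z => f u z) v (fy u v)) x y ->
  continuity_2d_pt fx x y -> continuity_2d_pt fy x y ->
  differentiable_pt_lim f x y (fx x y) (fy x y).
Proof.
  intros [d0 Hd] Cx Cy eps.
  destruct (Cx (pos_div_2 eps)) as [d1 H1].
  destruct (Cy (pos_div_2 eps)) as [d2 H2].
  assert (Hdp : 0 < Rmin d0 (Rmin d1 d2)) by (repeat apply Rmin_pos; apply cond_pos).
  exists (mkposreal _ Hdp). intros u v Hu Hv. cbn in Hu, Hv.
  assert (Hu0 : Rabs (u - x) < d0) by (eapply Rlt_le_trans; [exact Hu|apply Rmin_l]).
  assert (Hv0 : Rabs (v - y) < d0) by (eapply Rlt_le_trans; [exact Hv|apply Rmin_l]).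
  assert (Hu1 : Rabs (u - x) < d1) by (eapply Rlt_le_trans; [exact Hu|]; eapply Rle_trans; [apply Rmin_r|apply Rmin_l]).
  assert (Hv1 : Rabs (v - y) < d1) by (eapply Rlt_le_trans; [exact Hv|]; eapply Rle_trans; [apply Rmin_r|apply Rmin_l]).
  assert (Hv2 : Rabs (v - y) < d2) by (eapply Rlt_le_trans; [exact Hv|]; eapply Rle_trans; [apply Rmin_r|apply Rmin_r]).
  destruct (MVT_gen (fun z => f z v) x u (fun z => fx z v)) as [c1 [Hc1 E1]].
  { intros z Hz. assert (Hz' : Rabs (z - x) <= Rabs (u - x)) by (apply between_abs; lra).
    refine (proj1 (Hd z v _ _)); lra. }
  { intros z Hz. assert (Hz' : Rabs (z - x) <= Rabs (u - x)) by (apply between_abs; lra).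
    apply continuity_pt_filterlim. apply (Rcont_of_derive (fun w => f w v)). eexists. refine (proj1 (Hd z v _ _)); lra. }
  destruct (MVT_gen (fun z => f x z) y v (fun z => fy x z)) as [c2 [Hc2 E2]].
  { intros z Hz. assert (Hz' : Rabs (z - y) <= Rabs (v - y)) by (apply between_abs; lra).
    refine (proj2 (Hd x z _ _)). rewrite Rminus_eq_0, Rabs_R0; apply cond_pos. lra. }
  { intros z Hz. assert (Hz' : Rabs (z - y) <= Rabs (v - y)) by (apply between_abs; lra).
    apply continuity_pt_filterlim. apply (Rcont_of_derive (fun w => f x w)). eexists. refine (proj2 (Hd x z _ _)).
    rewrite Rminus_eq_0, Rabs_R0; apply cond_pos. lra. }
  assert (Hc1' : Rabs (c1 - x) <= Rabs (u - x)) by (apply between_abs; lra).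
  assert (Hc2' : Rabs (c2 - y) <= Rabs (v - y)) by (apply between_abs; lra).
  assert (K1 := H1 c1 v ltac:(lra) Hv1).
  assert (K2 := H2 x c2 ltac:(rewrite Rminus_eq_0, Rabs_R0; apply cond_pos) ltac:(lra)).
  cbn in K1, K2.
  replace (f u v - f x y - (fx x y * (u - x) + fy x y * (v - y))) with
    ((fx c1 v - fx x y) * (u - x) + (fy x c2 - fy x y) * (v - y)).
  2: { replace (f u v - f x y) with ((f u v - f x v) + (f x v - f x y)) by ring.
       rewrite E1, E2. ring. }
  eapply Rle_trans; [apply Rabs_triang|]. rewrite !Rabs_mult.
  assert (M1 := Rmax_l (Rabs (u - x)) (Rabs (v - y))).
  assert (M2 := Rmax_r (Rabs (u - x)) (Rabs (v - y))).
  assert (P1 := Rabs_pos (u - x)). assert (P2 := Rabs_pos (v - y)).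
  assert (Q1 := Rabs_pos (fx c1 v - fx x y)). assert (Q2 := Rabs_pos (fy x c2 - fy x y)).
  assert (eps / 2 * Rabs (u - x) + eps / 2 * Rabs (v - y) <= eps * Rmax (Rabs (u - x)) (Rabs (v - y))).
  { assert (Hep := cond_pos eps). nra. }
  assert (Rabs (fx c1 v - fx x y) * Rabs (u - x) <= eps / 2 * Rabs (u - x)) by (apply Rmult_le_compat_r; lra).
  assert (Rabs (fy x c2 - fy x y) * Rabs (v - y) <= eps / 2 * Rabs (v - y)) by (apply Rmult_le_compat_r; lra).
  lra.
Qed.

Lemma c2d_sq f x y : continuity_2d_pt f x y -> continuity_2d_pt (fun u v => f u v ^ 2) x y.
Proof. intros. apply (continuity_2d_pt_ext (fun u v => f u v * f u v)). intros; ring.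
  apply continuity_2d_pt_mult; auto. Qed.
Lemma c2d_ln f x y : continuity_2d_pt f x y -> 0 < f x y -> continuity_2d_pt (fun u v => ln (f u v)) x y.
Proof. intros. apply continuity_1d_2d_pt_comp; auto.
  apply continuity_pt_filterlim. apply (Rcont_of_derive ln). eexists. apply is_derive_ln; auto. Qed.
Lemma c2d_div f g x y : continuity_2d_pt f x y -> continuity_2d_pt g x y -> g x y <> 0 ->
  continuity_2d_pt (fun u v => f u v / g u v) x y.
Proof. intros. unfold Rdiv. apply continuity_2d_pt_mult; auto. apply continuity_2d_pt_inv; auto. Qed.

Ltac c2d' := repeat first [apply c2d_div | apply continuity_2d_pt_inv | apply continuity_2d_pt_plus | apply continuity_2d_pt_minus
  | apply continuity_2d_pt_mult | apply continuity_2d_pt_opp | apply continuity_2d_pt_id1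
  | apply continuity_2d_pt_id2 | apply continuity_2d_pt_const | apply c2d_sq
  | apply c2d_ln | apply c2d_div ].

Lemma BW_diff x y : 0 < y -> differentiable_pt_lim (fun u v => BW (u,v)) x y (Bx x y) (By x y).
Proof.
  intros Hy. apply diff_partials.
  - exists (mkposreal y Hy). intros u v _ Hv. cbn in Hv. apply Rabs_def2 in Hv.
    split; [apply BW_dx|apply BW_dy]; lra.
  - assert (H1 := Sq_pos x y 1 Hy). unfold Bx, Sq in *. c2d'; try (intro; nra); nra.
  - assert (H1 := Sq_pos x y 1 Hy). unfold By, Sq in *. c2d'; try (intro; nra); nra.
Qed.

Definition cderiv (h : R -> C) (t : R) (l : C) :=
  is_derive (fun s => fst (h s)) t (fst l) /\ is_derive (fun s => snd (h s)) t (snd l).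

Lemma cd_const (c : C) t : cderiv (fun _ => c) t (RtoC 0).
Proof. split; apply Rd_const. Qed.

Lemma cd_lin (w d : C) t : cderiv (fun s => Cplus w (Cmult (RtoC s) d)) t d.
Proof. split; cbn; auto_derive; try exact I; toR; ring. Qed.

Lemma cd_plus h1 h2 t l1 l2 : cderiv h1 t l1 -> cderiv h2 t l2 ->
  cderiv (fun s => Cplus (h1 s) (h2 s)) t (Cplus l1 l2).
Proof. intros [A1 B1] [A2 B2]; split; cbn; apply Rd_plus; auto. Qed.

Lemma cd_opp h1 t l1 : cderiv h1 t l1 -> cderiv (fun s => Copp (h1 s)) t (Copp l1).
Proof. intros [A1 B1]; split; cbn; apply Rd_opp; auto. Qed.

Lemma cd_minus h1 h2 t l1 l2 : cderiv h1 t l1 -> cderiv h2 t l2 ->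
  cderiv (fun s => Cminus (h1 s) (h2 s)) t (Cminus l1 l2).
Proof. intros. unfold Cminus. apply cd_plus; auto. apply cd_opp; auto. Qed.

Lemma cd_mult h1 h2 t l1 l2 : cderiv h1 t l1 -> cderiv h2 t l2 ->
  cderiv (fun s => Cmult (h1 s) (h2 s)) t (Cplus (Cmult l1 (h2 t)) (Cmult (h1 t) l2)).
Proof.
  intros [A1 B1] [A2 B2]; split; cbn.
  - eapply is_derive_eq. apply Rd_minus; apply Rd_mult; eauto. toR; ring.
  - eapply is_derive_eq. apply Rd_plus; apply Rd_mult; eauto. toR; ring.
Qed.

Lemma inv_re (a b : R -> R) t da db : is_derive a t da -> is_derive b t db -> a t ^ 2 + b t ^ 2 <> 0 ->
  is_derive (fun s => a s / (a s ^ 2 + b s ^ 2)) t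
   ((da * (a t ^ 2 + b t ^ 2) - a t * (2 * a t * da + 2 * b t * db)) / (a t ^ 2 + b t ^ 2) ^ 2).
Proof.
  intros A B H. assert (EA : Derive (fun x => a x) t = da) by (apply Rd_unique; exact A). assert (EB : Derive (fun x => b x) t = db) by (apply Rd_unique; exact B).
  auto_derive.
  - repeat split; try (eexists; eauto); auto; intro E; apply H; toR; rewrite <- E; ring.
  - rewrite EA, EB. Rfield. auto.
Qed.
Lemma inv_im (a b : R -> R) t da db : is_derive a t da -> is_derive b t db -> a t ^ 2 + b t ^ 2 <> 0 ->
  is_derive (fun s => - b s / (a s ^ 2 + b s ^ 2)) t
   ((- db * (a t ^ 2 + b t ^ 2) + b t * (2 * a t * da + 2 * b t * db)) / (a t ^ 2 + b t ^ 2) ^ 2).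
Proof.
  intros A B H. assert (EA : Derive (fun x => a x) t = da) by (apply Rd_unique; exact A). assert (EB : Derive (fun x => b x) t = db) by (apply Rd_unique; exact B).
  auto_derive.
  - repeat split; try (eexists; eauto); auto; intro E; apply H; toR; rewrite <- E; ring.
  - rewrite EA, EB. Rfield. auto.
Qed.

Lemma cinvnz_l a b : a^2+b^2 <> 0 -> ((a*a - b*b)*(a*a-b*b) + (a*b+b*a)*(a*b+b*a) <> 0 /\ a*a + b*b <> 0).
Proof.
  intros Hq. split; intro E; apply Hq.
  - assert (E2 : (a^2+b^2)^2 = 0) by (rewrite <- E; ring). destruct (Req_dec (a^2+b^2) 0) as [Z|Z]; [exact Z|]; exfalso; apply (pow_nonzero _ 2) in Z; contradiction.
  - rewrite <- E; ring.
Qed.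

Lemma cd_inv h t l : cderiv h t l -> h t <> RtoC 0 ->
  cderiv (fun s => Cinv (h s)) t (Copp (Cmult l (Cinv (Cmult (h t) (h t))))).
Proof.
  intros [A B] Hn.
  assert (Hq : fst (h t) ^ 2 + snd (h t) ^ 2 <> 0).
  { intro E. apply Hn. destruct (h t) as [a b]; cbn in *. unfold RtoC. f_equal; nra. }
  split; unfold Cinv; cbn [fst snd].
  - eapply is_derive_eq. apply (inv_re (fun s => fst (h s)) (fun s => snd (h s))); eauto.
    destruct l as [l1 l2]. destruct (h t) as [a b]; cbn in *. Rfield. apply cinvnz_l; auto.
  - eapply is_derive_eq. apply (inv_im (fun s => fst (h s)) (fun s => snd (h s))); eauto.
    destruct l as [l1 l2]. destruct (h t) as [a b]; cbn in *. Rfield. apply cinvnz_l; auto.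
Qed.

Lemma cderiv_eq h t l l' : cderiv h t l -> l = l' -> cderiv h t l'.
Proof. intros H ->; exact H. Qed.

Definition holo (F : C -> C) (z g : C) :=
  forall d, cderiv (fun t => F (Cplus z (Cmult (RtoC t) d))) 0 (Cmult g d).

Lemma Cpath0 z d : Cplus z (Cmult (RtoC 0) d) = z.
Proof. apply injective_projections; cbn; ring. Qed.

Lemma holo_const c z : holo (fun _ => c) z (RtoC 0).
Proof. intros d. eapply cderiv_eq. apply cd_const. ring. Qed.

Lemma holo_id z : holo (fun x => x) z (RtoC 1).
Proof. intros d. eapply cderiv_eq. apply cd_lin. ring. Qed.

Lemma holo_plus F G z a b : holo F z a -> holo G z b -> holo (fun x => Cplus (F x) (G x)) z (Cplus a b).
Proof. intros HF HG d. eapply cderiv_eq. apply cd_plus; auto. ring. Qed.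

Lemma holo_minus F G z a b : holo F z a -> holo G z b -> holo (fun x => Cminus (F x) (G x)) z (Cminus a b).
Proof. intros HF HG d. eapply cderiv_eq. apply cd_minus; auto. ring. Qed.

Lemma holo_mult F G z a b : holo F z a -> holo G z b ->
  holo (fun x => Cmult (F x) (G x)) z (Cplus (Cmult a (G z)) (Cmult (F z) b)).
Proof. intros HF HG d. eapply cderiv_eq. apply cd_mult; auto. cbv beta; rewrite Cpath0. ring. Qed.

Lemma holo_inv F z a : holo F z a -> F z <> RtoC 0 ->
  holo (fun x => Cinv (F x)) z (Copp (Cmult a (Cinv (Cmult (F z) (F z))))).
Proof. intros HF Hn d. eapply cderiv_eq. apply cd_inv; auto. cbv beta; rewrite Cpath0; auto.
  cbv beta; rewrite Cpath0. ring. Qed.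

Lemma holo_div F G z a b : holo F z a -> holo G z b -> G z <> RtoC 0 ->
  holo (fun x => Cdiv (F x) (G x)) z (Cplus (Cmult a (Cinv (G z))) (Cmult (F z) (Copp (Cmult b (Cinv (Cmult (G z) (G z))))))).
Proof. intros HF HG Hn. unfold Cdiv. apply (holo_mult F (fun x => Cinv (G x))); auto. apply (holo_inv G z b); auto. Qed.

Definition Uf (w : nat -> C) : C := Cdiv (Cminus (w 2%nat) (w 0%nat)) (Cminus (w 1%nat) (w 0%nat)).
Definition Uj (w : nat -> C) (j : nat) : C :=
  match j with
  | O => Cdiv (Cminus (w 2%nat) (w 1%nat)) (Cmult (Cminus (w 1%nat) (w 0%nat)) (Cminus (w 1%nat) (w 0%nat)))
  | S O => Cdiv (Cminus (w 0%nat) (w 2%nat)) (Cmult (Cminus (w 1%nat) (w 0%nat)) (Cminus (w 1%nat) (w 0%nat)))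
  | _ => Cinv (Cminus (w 1%nat) (w 0%nat))
  end.

Lemma Uf_nz w : 0 < snd (Uf w) -> Cminus (w 1%nat) (w 0%nat) <> RtoC 0.
Proof.
  intros H E. unfold Uf in H. rewrite E in H. cbn in H.
  revert H; unfold Rdiv; match goal with |- 0 < ?e -> _ => replace e with 0 by ring end; lra.
Qed.

Lemma holo_eq F z g g' : holo F z g -> g = g' -> holo F z g'.
Proof. intros H ->; exact H. Qed.

Lemma Cmult_nz (a b : C) : a <> RtoC 0 -> b <> RtoC 0 -> Cmult a b <> RtoC 0.
Proof. intros Ha Hb E. apply Hb. replace b with (Cmult (Cinv a) (Cmult a b)) by (field; auto).
  rewrite E. ring. Qed.

Ltac holo_step := lazymatch goal with
 | |- holo (fun x => Cdiv _ _) _ _ => apply holo_div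
 | |- holo (fun x => Cmult _ _) _ _ => apply holo_mult
 | |- holo (fun x => Cinv _) _ _ => apply holo_inv
 | |- holo (fun x => Cminus _ _) _ _ => apply holo_minus
 | |- holo (fun x => Cplus _ _) _ _ => apply holo_plus
 | |- holo (fun x => x) _ _ => apply holo_id
 | |- holo (fun _ => ?c) _ _ => apply holo_const
 | |- holo (Cminus ?a) _ _ => apply (holo_minus (fun _ => a) (fun x => x))
 | |- holo (Cplus ?a) _ _ => apply (holo_plus (fun _ => a) (fun x => x))
 | |- holo (Cmult ?a) _ _ => apply (holo_mult (fun _ => a) (fun x => x))
 | |- holo (Cdiv ?a) _ _ => apply (holo_div (fun _ => a) (fun x => x))
 end.
Ltac holo_tac := repeat holo_step.

Lemma holo_Uf w i : (i < 3)%nat -> Cminus (w 1%nat) (w 0%nat) <> RtoC 0 ->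
  holo (fun x => Uf (upd w i x)) (w i) (Uj w i).
Proof.
  intros Hi Hn. unfold Uf, upd.
  destruct i as [|[|[|i]]]; [| | |lia]; cbn [Nat.eqb];
  (eapply holo_eq; [holo_tac; auto|]); cbv beta; cbn [Uj]; field; auto.
Qed.

Lemma holo_Uj w i j : (i < 3)%nat -> (j < 3)%nat -> Cminus (w 1%nat) (w 0%nat) <> RtoC 0 ->
  exists g, holo (fun x => Uj (upd w i x) j) (w i) g.
Proof.
  intros Hi Hj Hn. unfold upd.
  destruct i as [|[|[|i]]]; [| | |lia]; destruct j as [|[|[|j]]]; try lia; cbn [Nat.eqb Uj];
  eexists; holo_tac; cbv beta; try apply Cmult_nz; auto.
Qed.

Lemma upd_same w j k : upd w j (w j) k = w k.
Proof. unfold upd. destruct (Nat.eqb k j) eqn:E; auto. apply Nat.eqb_eq in E. subst; auto. Qed.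

Lemma Uf_upd_same w j : Uf (upd w j (w j)) = Uf w.
Proof. unfold Uf. rewrite !upd_same. reflexivity. Qed.

Lemma pd_Vol w j d : (j < 3)%nat -> 0 < snd (Uf w) ->
  pd (fun w' => RtoC (Vol w')) j d w =
  (Bx (fst (Uf w)) (snd (Uf w)) * fst (Cmult (Uj w j) d) + By (fst (Uf w)) (snd (Uf w)) * snd (Cmult (Uj w j) d), 0).
Proof.
  intros Hj Hy.
  assert (Hn := Uf_nz w Hy).
  destruct (holo_Uf w j Hj Hn d) as [HX HY].
  unfold pd. unfold RtoC. cbn [fst snd]. f_equal.
  - apply Rd_unique.
    apply (Rd_ext (fun t => (fun u v => BW (u,v)) (fst (Uf (upd w j (Cplus (w j) (Cmult (RtoC t) d)))))
                                                   (snd (Uf (upd w j (Cplus (w j) (Cmult (RtoC t) d))))))).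
    { intros t. cbv beta. rewrite <- surjective_pairing. reflexivity. }
    apply is_derive_Reals.
    apply (derivable_pt_lim_comp_2d (fun u v => BW (u,v)) (fun t => fst (Uf (upd w j (Cplus (w j) (Cmult (RtoC t) d)))))
                                                   (fun t => snd (Uf (upd w j (Cplus (w j) (Cmult (RtoC t) d)))))).
    + rewrite Cpath0, Uf_upd_same. apply BW_diff; auto.
    + apply is_derive_Reals. exact HX.
    + apply is_derive_Reals. exact HY.
  - apply Derive_const.
Qed.

Definition Hf j w :=
  ((Bx (fst (Uf w)) (snd (Uf w)) * fst (Uj w j) + By (fst (Uf w)) (snd (Uf w)) * snd (Uj w j)) / 2,
   (By (fst (Uf w)) (snd (Uf w)) * fst (Uj w j) - Bx (fst (Uf w)) (snd (Uf w)) * snd (Uj w j)) / 2).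

Lemma wzbar_Vol w j : (j < 3)%nat -> 0 < snd (Uf w) -> wzbar (fun w' => RtoC (Vol w')) j w = Hf j w.
Proof.
  intros Hj Hy. unfold wzbar. rewrite !pd_Vol by auto. unfold Hf.
  apply injective_projections; cbn; field.
Qed.

Definition Hexp1 (X Y P Q : R -> R) t := (Bx (X t) (Y t) * P t + By (X t) (Y t) * Q t) / 2.
Definition Hexp2 (X Y P Q : R -> R) t := (By (X t) (Y t) * P t - Bx (X t) (Y t) * Q t) / 2.

Ltac get_deriv F :=
  let H := fresh "HD" in
  eassert (H : is_derive F 0 _);
  [ unfold Hexp1, Hexp2, Bx, By, Sq; auto_derive;
    [ repeat split; try (eexists; eassumption); try (intro; nra); try nra | reflexivity ]
  | rewrite (Rd_unique _ _ _ H); clear H ].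

Lemma final_combo (X1 Y1 P1 Q1 X2 Y2 P2 Q2 : R -> R) x y p q a b m n :
 X1 0 = x -> Y1 0 = y -> P1 0 = a -> Q1 0 = b -> X2 0 = x -> Y2 0 = y -> P2 0 = a -> Q2 0 = b ->
 is_derive X1 0 p -> is_derive Y1 0 q -> is_derive P1 0 m -> is_derive Q1 0 n ->
 is_derive X2 0 (-q) -> is_derive Y2 0 p -> is_derive P2 0 (-n) -> is_derive Q2 0 m ->
 0 < y ->
 Copp (Cmult (RtoC (/2)) (Cminus (Derive (Hexp1 X1 Y1 P1 Q1) 0, Derive (Hexp2 X1 Y1 P1 Q1) 0)
                                 (Cmult Ci (Derive (Hexp1 X2 Y2 P2 Q2) 0, Derive (Hexp2 X2 Y2 P2 Q2) 0))))
 = Cmult (RtoC (y / (2 * (x^2+y^2) * Sq x y 1))) (Cmult (p,q) (Cconj (a,b))).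
Proof.
  intros EX1 EY1 EP1 EQ1 EX2 EY2 EP2 EQ2 DX1 DY1 DP1 DQ1 DX2 DY2 DP2 DQ2 Hy.
  assert (S1 := Sq_pos x y 1 Hy). unfold Sq in S1.
  assert (S2 : 0 < x^2 + y^2) by nra.
  assert (T1 : 0 < (1 + - (1 * x)) * ((1 + - (1 * x)) * 1) + 1 * y * (1 * y * 1)) by nra.
  assert (T2 : 0 < x * (x * 1) + y * (y * 1)) by nra.
  assert (E1 : Derive (fun t => X1 t) 0 = p) by (apply Rd_unique; exact DX1).
  assert (E2 : Derive (fun t => Y1 t) 0 = q) by (apply Rd_unique; exact DY1).
  assert (E3 : Derive (fun t => P1 t) 0 = m) by (apply Rd_unique; exact DP1).
  assert (E4 : Derive (fun t => Q1 t) 0 = n) by (apply Rd_unique; exact DQ1).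
  assert (E5 : Derive (fun t => X2 t) 0 = -q) by (apply Rd_unique; exact DX2).
  assert (E6 : Derive (fun t => Y2 t) 0 = p) by (apply Rd_unique; exact DY2).
  assert (E7 : Derive (fun t => P2 t) 0 = -n) by (apply Rd_unique; exact DP2).
  assert (E8 : Derive (fun t => Q2 t) 0 = m) by (apply Rd_unique; exact DQ2).
  rewrite <- EX1, <- EY1 in T1, T2.
  get_deriv (Hexp1 X1 Y1 P1 Q1).
  get_deriv (Hexp2 X1 Y1 P1 Q1).
  rewrite EX1, EY1 in T1, T2. rewrite <- EX2, <- EY2 in T1, T2.
  get_deriv (Hexp1 X2 Y2 P2 Q2).
  get_deriv (Hexp2 X2 Y2 P2 Q2).
  rewrite E1, E2, E3, E4, E5, E6, E7, E8, EX1, EY1, EP1, EQ1, EX2, EY2, EP2, EQ2.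
  apply injective_projections; cbn.
  - unfold Sq. Rfield; Rside.
  - unfold Sq. Rfield; Rside.
Qed.

Lemma Uj_upd_same w i j : Uj (upd w i (w i)) j = Uj w j.
Proof. unfold Uj. rewrite !upd_same. reflexivity. Qed.

Definition wpath (z : nat -> C) i d t := upd z i (Cplus (z i) (Cmult (RtoC t) d)).

Lemma pd_G z i j d : (i < 3)%nat -> (j < 3)%nat -> 0 < snd (Uf z) ->
  pd (fun w => wzbar (fun w' => RtoC (Vol w')) j w) i d z =
  (Derive (Hexp1 (fun t => fst (Uf (wpath z i d t))) (fun t => snd (Uf (wpath z i d t)))
                 (fun t => fst (Uj (wpath z i d t) j)) (fun t => snd (Uj (wpath z i d t) j))) 0,
   Derive (Hexp2 (fun t => fst (Uf (wpath z i d t))) (fun t => snd (Uf (wpath z i d t)))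
                 (fun t => fst (Uj (wpath z i d t) j)) (fun t => snd (Uj (wpath z i d t) j))) 0).
Proof.
  intros Hi Hj Hy.
  assert (Hn := Uf_nz z Hy).
  destruct (holo_Uf z i Hi Hn d) as [HX HY].
  assert (Hloc : locally 0 (fun t => 0 < snd (Uf (wpath z i d t)))).
  { apply (cont_pos (fun t => snd (Uf (wpath z i d t)))).
    - apply Rcont_of_derive. eexists. exact HY.
    - unfold wpath. rewrite Cpath0, Uf_upd_same. exact Hy. }
  unfold pd. f_equal.
  - apply Derive_ext_loc. eapply filter_imp; [|exact Hloc]. intros t Ht.
    unfold wpath in *. rewrite wzbar_Vol by auto. reflexivity.
  - apply Derive_ext_loc. eapply filter_imp; [|exact Hloc]. intros t Ht.
    unfold wpath in *. rewrite wzbar_Vol by auto. reflexivity.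
Qed.

Lemma Dmat_formula z i j : (i < 3)%nat -> (j < 3)%nat -> 0 < snd (Uf z) ->
  Dmat z i j = Cmult (RtoC (snd (Uf z) / (2 * (fst (Uf z) ^ 2 + snd (Uf z) ^ 2) * Sq (fst (Uf z)) (snd (Uf z)) 1)))
                     (Cmult (Uj z i) (Cconj (Uj z j))).
Proof.
  intros Hi Hj Hy.
  assert (Hn := Uf_nz z Hy).
  destruct (holo_Uj z i j Hi Hj Hn) as [g Hg].
  destruct (holo_Uf z i Hi Hn (RtoC 1)) as [HX1 HY1].
  destruct (holo_Uf z i Hi Hn Ci) as [HX2 HY2].
  destruct (Hg (RtoC 1)) as [HP1 HQ1].
  destruct (Hg Ci) as [HP2 HQ2].
  unfold Dmat, wz. rewrite !pd_G by auto.
  rewrite (surjective_pairing (Uj z i)). rewrite (surjective_pairing (Uj z j)).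
  apply (final_combo _ _ _ _ _ _ _ _ _ _ _ _ _ _ (fst g) (snd g)).
  all: unfold wpath; try (cbv beta; rewrite Cpath0, ?Uf_upd_same, ?Uj_upd_same; reflexivity).
  all: try assumption.
  - eapply is_derive_eq; [exact HX1|]. destruct (Uj z i); cbn; toR; ring.
  - eapply is_derive_eq; [exact HY1|]. destruct (Uj z i); cbn; toR; ring.
  - eapply is_derive_eq; [exact HP1|]. destruct g; cbn; toR; ring.
  - eapply is_derive_eq; [exact HQ1|]. destruct g; cbn; toR; ring.
  - eapply is_derive_eq; [exact HX2|]. destruct (Uj z i); cbn; toR; ring.
  - eapply is_derive_eq; [exact HY2|]. destruct (Uj z i); cbn; toR; ring.
  - eapply is_derive_eq; [exact HP2|]. destruct g; cbn; toR; ring.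
  - eapply is_derive_eq; [exact HQ2|]. destruct g; cbn; toR; ring.
Qed.

Lemma circ (a1 a2 b1 b2 p1 p2 R2 : R) : p1^2+p2^2 = R2 -> (p1-a1)^2+(p2-a2)^2 = R2 -> (p1-b1)^2+(p2-b2)^2 = R2 ->
  a1*b2 - a2*b1 <> 0 -> 4 * (a1*b2 - a2*b1)^2 * R2 = (a1^2+a2^2)*(b1^2+b2^2)*((a1-b1)^2+(a2-b2)^2).
Proof.
  intros H0 H1 H2 Hd.
  assert (L1 : a1*p1 + a2*p2 = (a1^2+a2^2)/2) by nra.
  assert (L2 : b1*p1 + b2*p2 = (b1^2+b2^2)/2) by nra.
  assert (P1 : p1 * (a1*b2 - a2*b1) = ((a1^2+a2^2)*b2 - (b1^2+b2^2)*a2)/2).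
  { replace (p1 * (a1*b2 - a2*b1)) with (b2*(a1*p1 + a2*p2) - a2*(b1*p1 + b2*p2)) by ring.
    rewrite L1, L2. field. }
  assert (P2 : p2 * (a1*b2 - a2*b1) = ((b1^2+b2^2)*a1 - (a1^2+a2^2)*b1)/2).
  { replace (p2 * (a1*b2 - a2*b1)) with (a1*(b1*p1 + b2*p2) - b1*(a1*p1 + a2*p2)) by ring.
    rewrite L1, L2. field. }
  rewrite <- H0.
  replace (4 * (a1 * b2 - a2 * b1) ^ 2 * (p1 ^ 2 + p2 ^ 2)) with
    (4 * ((p1 * (a1*b2 - a2*b1))^2 + (p2 * (a1*b2 - a2*b1))^2)) by ring.
  rewrite P1, P2. field.
Qed.

Definition a1 (z : nat -> C) := fst (z 1%nat) - fst (z 0%nat).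
Definition a2 (z : nat -> C) := snd (z 1%nat) - snd (z 0%nat).
Definition b1 (z : nat -> C) := fst (z 2%nat) - fst (z 0%nat).
Definition b2 (z : nat -> C) := snd (z 2%nat) - snd (z 0%nat).
Definition det z := a1 z * b2 z - a2 z * b1 z.
Definition nn z := a1 z ^ 2 + a2 z ^ 2.

Lemma Area_RtoC z : Area z = RtoC (det z / 2).
Proof. unfold Area, det, a1, a2, b1, b2. apply injective_projections; cbn; Rfield. Qed.

Lemma nn_nz z : det z <> 0 -> nn z <> 0.
Proof. unfold nn, det. intros H E. apply H.
  assert (a1 z = 0) by nra. assert (a2 z = 0) by nra. rewrite H0, H1. ring. Qed.

Lemma Uf_coords z : nn z <> 0 -> Uf z = ((b1 z * a1 z + b2 z * a2 z) / nn z, det z / nn z).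
Proof. intros H. unfold nn, det, a1, a2, b1, b2 in *. unfold Uf.
  apply injective_projections; cbn; Rfield; intro E; apply H; rewrite <- E; ring. Qed.

Lemma za z : Cminus (z 1%nat) (z 0%nat) = (a1 z, a2 z).
Proof. unfold a1, a2. apply injective_projections; cbn; toR; ring. Qed.

Lemma modsq (w c : C) Rc : Cmod (Cminus w c) = Rc -> Rc ^ 2 = (fst w - fst c)^2 + (snd w - snd c)^2.
Proof. intros H. rewrite <- H. unfold Cmod. rewrite pow2_sqrt.
  - cbn. toR; ring.
  - apply Rplus_le_le_0_compat; apply pow2_ge_0.
Qed.

Lemma bb_nz z : det z <> 0 -> b1 z ^ 2 + b2 z ^ 2 <> 0.
Proof. unfold det. intros H E. apply H.
  assert (b1 z = 0) by nra. assert (b2 z = 0) by nra. rewrite H0, H1. ring. Qed.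
Lemma sumsq0 x y : x ^ 2 + y ^ 2 = 0 -> x = 0 /\ y = 0.
Proof. intros E. assert (Hx : x * x = 0) by nra. assert (Hy : y * y = 0) by nra.
  apply Rmult_integral in Hx, Hy. destruct Hx, Hy; auto. Qed.
Lemma ab_nz z : det z <> 0 -> (a1 z - b1 z) ^ 2 + (a2 z - b2 z) ^ 2 <> 0.
Proof. unfold det. intros H E. apply H. apply sumsq0 in E. destruct E as [E1 E2].
  replace (a1 z) with (b1 z) by lra. replace (a2 z) with (b2 z) by lra. ring. Qed.

Lemma Rc2_eq z c Rc : 0 < det z -> (forall k, (k<3)%nat -> Cmod (Cminus (z k) c) = Rc) ->
  Rc ^ 2 = nn z * (b1 z ^ 2 + b2 z ^ 2) * ((a1 z - b1 z) ^ 2 + (a2 z - b2 z) ^ 2) / (4 * det z ^ 2).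
Proof.
  intros Hd Hc.
  assert (Hd0 : det z <> 0) by lra.
  assert (E0 := modsq _ _ _ (Hc 0%nat ltac:(lia))).
  assert (E1 := modsq _ _ _ (Hc 1%nat ltac:(lia))).
  assert (E2 := modsq _ _ _ (Hc 2%nat ltac:(lia))).
  assert (HR := circ (a1 z) (a2 z) (b1 z) (b2 z) (fst c - fst (z 0%nat)) (snd c - snd (z 0%nat)) (Rc^2)).
  unfold a1, a2, b1, b2 in HR.
  specialize (HR ltac:(rewrite E0; ring) ltac:(rewrite E1; ring) ltac:(rewrite E2; ring)).
  fold (a1 z) (a2 z) (b1 z) (b2 z) in HR. fold (det z) in HR.
  specialize (HR Hd0).
  unfold nn. rewrite <- HR. field. auto.
Qed.

Lemma c_eq z c Rc : 0 < det z -> (forall k, (k<3)%nat -> Cmod (Cminus (z k) c) = Rc) ->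
 RtoC (snd (Uf z) / (2 * (fst (Uf z) ^ 2 + snd (Uf z) ^ 2) * Sq (fst (Uf z)) (snd (Uf z)) 1))
 = Cdiv (Cmult (Cmult (Cminus (z 1%nat) (z 0%nat)) (Cconj (Cminus (z 1%nat) (z 0%nat))))
               (Cmult (Cminus (z 1%nat) (z 0%nat)) (Cconj (Cminus (z 1%nat) (z 0%nat)))))
        (Cmult (Cmult (RtoC 16) (Area z)) (RtoC (Rc^2))).
Proof.
  intros Hd Hc.
  assert (Hd0 : det z <> 0) by lra.
  assert (Hn := nn_nz z Hd0). assert (Hb := bb_nz z Hd0). assert (Hab := ab_nz z Hd0).
  assert (E0 := modsq _ _ _ (Hc 0%nat ltac:(lia))).
  assert (E1 := modsq _ _ _ (Hc 1%nat ltac:(lia))).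
  assert (E2 := modsq _ _ _ (Hc 2%nat ltac:(lia))).
  assert (HR := circ (a1 z) (a2 z) (b1 z) (b2 z) (fst c - fst (z 0%nat)) (snd c - snd (z 0%nat)) (Rc^2)).
  unfold a1, a2, b1, b2 in HR.
  specialize (HR ltac:(rewrite E0; ring) ltac:(rewrite E1; ring) ltac:(rewrite E2; ring)).
  fold (a1 z) (a2 z) (b1 z) (b2 z) in HR. fold (det z) in HR.
  specialize (HR Hd0).
  assert (HR' : Rc ^ 2 = nn z * (b1 z ^ 2 + b2 z ^ 2) * ((a1 z - b1 z) ^ 2 + (a2 z - b2 z) ^ 2) / (4 * det z ^ 2)).
  { unfold nn. rewrite <- HR. field. auto. }
  rewrite Uf_coords by auto. rewrite Area_RtoC, za, HR'. cbn [fst snd].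
  unfold Sq, nn, det in *.
  apply injective_projections; cbn; Rfield; Rside.
Qed.

Lemma Ci_sq : Cmult Ci Ci = RtoC (-1).
Proof. apply injective_projections; cbn; toR; ring. Qed.
Lemma R16 : RtoC 16 = Cmult (RtoC 4) (RtoC 4).
Proof. apply injective_projections; cbn; toR; ring. Qed.
Lemma RtoC_nz r : r <> 0 -> RtoC r <> RtoC 0.
Proof. intros H E. apply H. unfold RtoC in E. injection E. auto. Qed.
Lemma Ci_nz : Ci <> RtoC 0.
Proof. intros E. unfold Ci, RtoC in E. injection E. lra. Qed.

Lemma nab_prod X Y A : A <> RtoC 0 ->
  Cmult (Copp (Cdiv X (Cmult (Cmult (RtoC 4) Ci) A))) (Cdiv Y (Cmult (Cmult (RtoC 4) Ci) A)) =
  Cdiv (Cmult X Y) (Cmult (Cmult (RtoC 4) (RtoC 4)) (Cmult A A)).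
Proof.
  intros HA.
  assert (H4 : RtoC 4 <> RtoC 0) by (apply RtoC_nz; lra).
  assert (HCi := Ci_nz).
  transitivity (Copp (Cdiv (Cmult X Y) (Cmult (Cmult (Cmult (RtoC 4) (RtoC 4)) (Cmult Ci Ci)) (Cmult A A)))).
  { field; repeat split; auto. }
  rewrite Ci_sq.
  assert (Hm : RtoC (-1) = Copp (RtoC 1)) by (apply injective_projections; cbn; toR; ring).
  rewrite Hm. field; repeat split; auto; apply RtoC_nz; lra.
Qed.

Theorem proposition2 (z : nat -> C) (c : C) (Rc : R)
  (Hccw : (0 < fst (Area z))%R)
  (Hcirc : forall k : nat, (k < 3)%nat -> Cmod (Cminus (z k) c) = Rc)
  (Phi Psi : nat -> C) :
  sum3 (fun i => sum3 (fun j => Cmult (Cmult (Phi i) (Dmat z i j)) (Cconj (Psi j)))) =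
  Cmult (Cdiv (Area z) (RtoC (Rc ^ 2)))
        (Cmult (nablabar z Phi) (nabla z (fun k => Cconj (Psi k)))).
Proof.
  assert (Hd : 0 < det z).
  { rewrite Area_RtoC in Hccw. cbn in Hccw. lra. }
  assert (Hd0 : det z <> 0) by lra.
  assert (Hn := nn_nz z Hd0).
  assert (Hy : 0 < snd (Uf z)).
  { rewrite Uf_coords by auto. cbn. unfold nn in *. apply Rdiv_lt_0_compat; auto.
    assert (0 <= a1 z ^ 2) by apply pow2_ge_0. assert (0 <= a2 z ^ 2) by apply pow2_ge_0. lra. }
  assert (Ha := Uf_nz z Hy).
  assert (Hac : Cconj (Cminus (z 1%nat) (z 0%nat)) <> RtoC 0).
  { intro E. apply Ha. rewrite <- (Cconj_conj (Cminus _ _)). rewrite E.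
    apply injective_projections; cbn; toR; ring. }
  assert (HA : Area z <> RtoC 0).
  { rewrite Area_RtoC. apply RtoC_nz. lra. }
  assert (HR : RtoC (Rc ^ 2) <> RtoC 0).
  { apply RtoC_nz. rewrite (Rc2_eq z c Rc Hd Hcirc).
    assert (Hb := bb_nz z Hd0). assert (Hab := ab_nz z Hd0).
    unfold Rdiv. repeat apply Rmult_integral_contrapositive_currified; auto.
    apply Rinv_neq_0_compat. apply Rmult_integral_contrapositive_currified; [lra|].
    apply pow_nonzero; auto. }
  unfold sum3. cbv beta.
  rewrite !Dmat_formula by first [lia | exact Hy].
  rewrite !(c_eq z c Rc Hd Hcirc).
  unfold nablabar, nabla. rewrite nab_prod by auto.
  rewrite R16.
  cbn [Uj].
  assert (Haa : Cmult (Cminus (z 1%nat) (z 0%nat)) (Cminus (z 1%nat) (z 0%nat)) <> RtoC 0) by (apply Cmult_nz; auto).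
  rewrite !Cdiv_conj by auto. rewrite !Cinv_conj by auto. rewrite !Cmult_conj, !Cminus_conj.
  assert (H4 : RtoC 4 <> RtoC 0) by (apply RtoC_nz; lra).
  rewrite !Cminus_conj in Hac.
  field. repeat split; auto.
Qed.
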